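(* For a Lie superalgebra $L$, \[Z^{*}(L)=\bigcap\{\phi(Z(M)) : \phi:M\to L \text{ is an epimorphism of Lie superalgebras with } \ker\phi\subseteq Z(M)\}.\]
   Context: All algebras are over a field $\mathbb{F}$ of characteristic $\neq 2,3$. A Lie superalgebra $L$ is capable if $L\cong H/Z(H)$ for some Lie superalgebra $H$. The epicenter $Z^{*}(L)$ is the smallest graded ideal $I$ of $L$ such that $L/I$ is capable. Homomorphisms of Lie superalgebras are even (degree-preserving). *)

(* Defs.v *)
From HB Require Import structures.
From mathcomp Require Import all_boot all_order all_algebra.
Set Implicit Arguments. Unset Strict Implicit. Unset Printing Implicit Defensive.
Import GRing.Theory.
Local Open Scope ring_scope.

Definition ssign (R : pzRingType) (b : bool) : R := (-1) ^+ b.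

(* A Lie superalgebra over F: an F-vector space V with a linear idempotent
   projection [even] onto the even part V0 (whose kernel is the odd part V1),
   so V = V0 (+) V1, together with a bilinear bracket satisfying the graded
   conditions, super skew-symmetry and the super Jacobi identity on
   homogeneous elements. *)
Record LieSA (F : fieldType) := {
  carrier : lmodType F;
  even : carrier -> carrier;
  lie : carrier -> carrier -> carrier;
  even_lin : forall (a : F) x y, even (a *: x + y) = a *: even x + even y;
  even_idem : forall x, even (even x) = even x;
  lie_linl : forall (a : F) x y z, lie (a *: x + y) z = a *: lie x z + lie y z;
  lie_linr : forall (a : F) x y z, lie x (a *: y + z) = a *: lie x y + lie x z;
  (* homogeneity of parity p : even x = x if p = false (even), 0 if odd *)
  lie_graded : forall (p q : bool) x y,
      even x = (if p then 0 else x) -> even y = (if q then 0 else y) ->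
      even (lie x y) = (if p (+) q then 0 else lie x y);
  lie_superskew : forall (p q : bool) x y,
      even x = (if p then 0 else x) -> even y = (if q then 0 else y) ->
      lie x y = - (ssign F (p && q) *: lie y x);
  lie_superjacobi : forall (p q r : bool) x y z,
      even x = (if p then 0 else x) -> even y = (if q then 0 else y) ->
      even z = (if r then 0 else z) ->
      ssign F (p && r) *: lie x (lie y z) + ssign F (q && p) *: lie y (lie z x)
        + ssign F (r && q) *: lie z (lie x y) = 0
}.

Arguments carrier {F}.
Arguments even {F}.
Arguments lie {F}.

Definition homog (F : fieldType) (L : LieSA F) (p : bool) (x : carrier L) :=
  even L x = (if p then 0 else x).

Record LieSAhom (F : fieldType) (L M : LieSA F) := {
  homf :> carrier L -> carrier M;
  homf_lin : forall (a : F) x y, homf (a *: x + y) = a *: homf x + homf y;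
  homf_lie : forall x y, homf (lie L x y) = lie M (homf x) (homf y);
  homf_even : forall x, homf (even L x) = even M (homf x)
}.

Definition epi (F : fieldType) (L M : LieSA F) (f : LieSAhom L M) :=
  forall y : carrier M, exists x, f x = y.

Definition center (F : fieldType) (L : LieSA F) (z : carrier L) : Prop :=
  forall x, lie L z x = 0.

Definition graded_ideal (F : fieldType) (L : LieSA F) (I : carrier L -> Prop) :=
  [/\ I 0,
      (forall (a : F) x y, I x -> I y -> I (a *: x + y)),
      (forall x, I x -> I (even L x)) &
      (forall x y, I y -> I (lie L x y))].

(* L is capable: L ~= H / Z(H) for some H, i.e. (first isomorphism theorem)
   there is an epimorphism H ->> L with kernel exactly Z(H). *)
Definition capable (F : fieldType) (L : LieSA F) : Prop :=
  exists (H : LieSA F) (f : LieSAhom H L),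
    epi f /\ forall h, f h = 0 <-> center h.

(* L / I is capable: some (equivalently, any) Lie superalgebra Q with an
   epimorphism L ->> Q of kernel I (i.e. Q ~= L/I) is capable. *)
Definition quot_capable (F : fieldType) (L : LieSA F) (I : carrier L -> Prop) :=
  exists (Q : LieSA F) (p : LieSAhom L Q),
    [/\ epi p, (forall x, p x = 0 <-> I x) & capable Q].

Definition is_epicenter (F : fieldType) (L : LieSA F) (I : carrier L -> Prop) :=
  [/\ graded_ideal I, quot_capable I &
      forall J, graded_ideal J -> quot_capable J -> forall x, I x -> J x].

(* Main.v *)
From HB Require Import structures.
From mathcomp Require Import all_boot all_order all_algebra generic_quotient.
From Stdlib Require Import ClassicalEpsilon.
Require Import Defs.
Import GRing.Theory.
Local Open Scope ring_scope.

Local Open Scope quotient_scope.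

Set Implicit Arguments.
Record PreLie (F : fieldType) := {
  pT : choiceType;
  pz : pT; pad : pT -> pT -> pT; pop : pT -> pT; psc : F -> pT -> pT;
  pev : pT -> pT; plb : pT -> pT -> pT; pR : pT -> pT -> Prop;
  Rrefl : forall a, pR a a;
  Rsym : forall a b, pR a b -> pR b a;
  Rtrans : forall a b c, pR a b -> pR b c -> pR a c;
  Rad : forall a a' b b', pR a a' -> pR b b' -> pR (pad a b) (pad a' b');
  Rop : forall a a', pR a a' -> pR (pop a) (pop a');
  Rsc : forall x a a', pR a a' -> pR (psc x a) (psc x a');
  Rev : forall a a', pR a a' -> pR (pev a) (pev a');
  Rlb : forall a a' b b', pR a a' -> pR b b' -> pR (plb a b) (plb a' b');
  HadA : forall a b c, pR (pad a (pad b c)) (pad (pad a b) c);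
  HadC : forall a b, pR (pad a b) (pad b a);
  Had0 : forall a, pR (pad pz a) a;
  HadN : forall a, pR (pad (pop a) a) pz;
  HscA : forall x y a, pR (psc x (psc y a)) (psc (x * y) a);
  Hsc1 : forall a, pR (psc 1 a) a;
  HscDr : forall x a b, pR (psc x (pad a b)) (pad (psc x a) (psc x b));
  HscDl : forall x y a, pR (psc (x + y) a) (pad (psc x a) (psc y a));
  Hevl : forall x a b, pR (pev (pad (psc x a) b)) (pad (psc x (pev a)) (pev b));
  Hevi : forall a, pR (pev (pev a)) (pev a);
  Hll : forall x a b c, pR (plb (pad (psc x a) b) c) (pad (psc x (plb a c)) (plb b c));
  Hlr : forall x a b c, pR (plb a (pad (psc x b) c)) (pad (psc x (plb a b)) (plb a c));
  Hgr : forall (p q : bool) a b, pR (pev a) (if p then pz else a) -> pR (pev b) (if q then pz else b) ->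
    pR (pev (plb a b)) (if p (+) q then pz else plb a b);
  Hsk : forall (p q : bool) a b, pR (pev a) (if p then pz else a) -> pR (pev b) (if q then pz else b) ->
    pR (plb a b) (pop (psc (ssign F (p && q)) (plb b a)));
  Hjac : forall (p q r : bool) a b c, pR (pev a) (if p then pz else a) -> pR (pev b) (if q then pz else b) ->
    pR (pev c) (if r then pz else c) ->
    pR (pad (pad (psc (ssign F (p && r)) (plb a (plb b c))) (psc (ssign F (q && p)) (plb b (plb c a))))
          (psc (ssign F (r && q)) (plb c (plb a b)))) pz
}.

Section Build.
Variables (F : fieldType) (P : PreLie F).
Local Notation T := (pT P).
Local Notation R := (pR P).
Local Notation z := (pz P).
Local Notation ad := (pad P).
Local Notation op := (pop P).
Local Notation sc := (psc P).
Local Notation ev := (pev P).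
Local Notation lb := (plb P).

Definition eb (a b : T) : bool := if excluded_middle_informative (R a b) then true else false.
Lemma ebP a b : reflect (R a b) (eb a b).
Proof. rewrite /eb; case: excluded_middle_informative => H; constructor => //. Qed.
Lemma eb_equiv : equiv_class_of eb.
Proof.
split.
- by move=> a; apply/ebP; apply: Rrefl.
- by move=> a b; apply/ebP/ebP; apply: Rsym.
- by move=> b a c /ebP H1 /ebP H2; apply/ebP; apply: Rtrans H1 H2.
Qed.
Definition ebe := EquivRelPack eb_equiv.
Definition Q := {eq_quot ebe}.
HB.instance Definition _ := Choice.on Q.
HB.instance Definition _ := Quotient.on Q.
Definition pQ (a : T) : Q := \pi_Q a.
Lemma pQ_eq a b : pQ a = pQ b <-> R a b.
Proof. split; [by move/eqmodP/ebP | by move=> H; apply/eqmodP/ebP]. Qed.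
Lemma pQ_repr (x : Q) : pQ (repr x) = x.
Proof. exact: reprK. Qed.
Lemma R_repr a : R (repr (pQ a)) a.
Proof. by apply/pQ_eq; rewrite pQ_repr. Qed.
Lemma Qind (Pr : Q -> Prop) : (forall a, Pr (pQ a)) -> forall x, Pr x.
Proof. by move=> H x; rewrite -(pQ_repr x). Qed.

Definition zQ := pQ z.
Definition adQ := locked (fun (X Y : Q) => pQ (ad (repr X) (repr Y))).
Definition opQ := locked (fun (X : Q) => pQ (op (repr X))).
Definition scQ := locked (fun x (X : Q) => pQ (sc x (repr X))).
Definition evQ := locked (fun (X : Q) => pQ (ev (repr X))).
Definition lbQ := locked (fun (X Y : Q) => pQ (lb (repr X) (repr Y))).
Lemma adQE a b : adQ (pQ a) (pQ b) = pQ (ad a b).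
Proof. by rewrite /adQ -lock; apply/pQ_eq/Rad; apply: R_repr. Qed.
Lemma opQE a : opQ (pQ a) = pQ (op a).
Proof. by rewrite /opQ -lock; apply/pQ_eq/Rop; apply: R_repr. Qed.
Lemma scQE x a : scQ x (pQ a) = pQ (sc x a).
Proof. by rewrite /scQ -lock; apply/pQ_eq/Rsc; apply: R_repr. Qed.
Lemma evQE a : evQ (pQ a) = pQ (ev a).
Proof. by rewrite /evQ -lock; apply/pQ_eq/Rev; apply: R_repr. Qed.
Lemma lbQE a b : lbQ (pQ a) (pQ b) = pQ (lb a b).
Proof. by rewrite /lbQ -lock; apply/pQ_eq/Rlb; apply: R_repr. Qed.
Definition QE := (adQE, opQE, scQE, evQE, lbQE).

Lemma adQA : associative adQ.
Proof. by elim/Qind=> a; elim/Qind=> b; elim/Qind=> c; rewrite !QE; apply/pQ_eq; apply: HadA. Qed.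
Lemma adQC : commutative adQ.
Proof. by elim/Qind=> a; elim/Qind=> b; rewrite !QE; apply/pQ_eq; apply: HadC. Qed.
Lemma adQ0 : left_id zQ adQ.
Proof. by elim/Qind=> a; rewrite !QE; apply/pQ_eq; apply: Had0. Qed.
Lemma adQN : left_inverse zQ opQ adQ.
Proof. by elim/Qind=> a; rewrite !QE; apply/pQ_eq; apply: HadN. Qed.
HB.instance Definition _ := GRing.isZmodule.Build Q adQA adQC adQ0 adQN.
Lemma QaddE a b : (pQ a : Q) + pQ b = pQ (ad a b). Proof. exact: adQE. Qed.
Lemma QoppE a : - (pQ a : Q) = pQ (op a). Proof. exact: opQE. Qed.
Lemma Q0E : (0 : Q) = pQ z. Proof. by []. Qed.
Lemma scQA x y (X : Q) : scQ x (scQ y X) = scQ (x * y) X.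
Proof. by elim/Qind: X => a; rewrite !QE; apply/pQ_eq; apply: HscA. Qed.
Lemma scQ1 : left_id 1 scQ.
Proof. by elim/Qind=> a; rewrite !QE; apply/pQ_eq; apply: Hsc1. Qed.
Lemma scQDr : right_distributive scQ +%R.
Proof. by move=> x; elim/Qind=> a; elim/Qind=> b; rewrite /= !QaddE !scQE QaddE; apply/pQ_eq; apply: HscDr. Qed.
Lemma scQDl (X : Q) : {morph scQ^~ X: x y / x + y}.
Proof. by elim/Qind: X => a x y; rewrite /= !scQE QaddE; apply/pQ_eq; apply: HscDl. Qed.
HB.instance Definition _ := GRing.Zmodule_isLmodule.Build F Q scQA scQ1 scQDr scQDl.
Lemma QscE x a : x *: (pQ a : Q) = pQ (sc x a). Proof. exact: scQE. Qed.
Definition QE3 := (QaddE, QoppE, QscE, evQE, lbQE).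

Lemma homQ (p : bool) a : evQ (pQ a) = (if p then 0 else pQ a) -> R (ev a) (if p then z else a).
Proof. by rewrite evQE; case: p => /pQ_eq. Qed.

Definition mkL : LieSA F.
refine (@Build_LieSA F Q evQ lbQ _ _ _ _ _ _ _).
- by move=> x; elim/Qind=> a; elim/Qind=> b; rewrite !QE3; apply/pQ_eq; apply: Hevl.
- by elim/Qind=> a; rewrite !QE3; apply/pQ_eq; apply: Hevi.
- by move=> x; elim/Qind=> a; elim/Qind=> b; elim/Qind=> c; rewrite !QE3; apply/pQ_eq; apply: Hll.
- by move=> x; elim/Qind=> a; elim/Qind=> b; elim/Qind=> c; rewrite !QE3; apply/pQ_eq; apply: Hlr.
- move=> p q; elim/Qind=> a; elim/Qind=> b /homQ ha /homQ hb; rewrite !QE3.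
  move: (@Hgr _ P p q a b ha hb); by case: (p (+) q) => /pQ_eq.
- move=> p q; elim/Qind=> a; elim/Qind=> b /homQ ha /homQ hb; rewrite !QE3.
  by apply/pQ_eq; apply: (@Hsk _ P p q a b ha hb).
- move=> p q r; elim/Qind=> a; elim/Qind=> b; elim/Qind=> c /homQ ha /homQ hb /homQ hc.
  by rewrite !QE3 Q0E; apply/pQ_eq; apply: (@Hjac _ P p q r a b c ha hb hc).
Defined.

Definition pi (a : T) : carrier mkL := pQ a.
Lemma pi_eq a b : pi a = pi b <-> R a b. Proof. exact: pQ_eq. Qed.
Lemma pi_ind (Pr : carrier mkL -> Prop) : (forall a, Pr (pi a)) -> forall x, Pr x.
Proof. exact: Qind. Qed.
Lemma piD a b : pi a + pi b = pi (ad a b). Proof. exact: QaddE. Qed.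
Lemma piN a : - pi a = pi (op a). Proof. exact: QoppE. Qed.
Lemma piZ x a : x *: pi a = pi (sc x a). Proof. exact: QscE. Qed.
Lemma pi0 : (0 : carrier mkL) = pi z. Proof. by []. Qed.
Lemma piE a : even mkL (pi a) = pi (ev a). Proof. exact: evQE. Qed.
Lemma piL a b : lie mkL (pi a) (pi b) = pi (lb a b). Proof. exact: lbQE. Qed.
End Build.

Set Implicit Arguments.

Lemma dup0 (V : zmodType) (a : V) : a = a + a -> a = 0.
Proof. by move=> h; have := congr1 (fun t => t - a) h; rewrite addrK subrr. Qed.

Section Gen.
Variables (F : fieldType) (L : LieSA F).
Local Notation e := (even L).
Local Notation lie := (lie L).

Lemma lieDl x y z : lie (x + y) z = lie x z + lie y z.
Proof. by have := lie_linl 1 x y z; rewrite !scale1r. Qed.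
Lemma lie0l z : lie 0 z = 0.
Proof. by apply: dup0; rewrite -lieDl addr0. Qed.
Lemma lieZl a x z : lie (a *: x) z = a *: lie x z.
Proof. by have := lie_linl a x 0 z; rewrite !addr0 lie0l addr0. Qed.
Lemma lieNl x z : lie (- x) z = - lie x z.
Proof. by rewrite -scaleN1r lieZl scaleN1r. Qed.
Lemma lieBl x y z : lie (x - y) z = lie x z - lie y z.
Proof. by rewrite lieDl lieNl. Qed.
Lemma lieDr x y z : lie x (y + z) = lie x y + lie x z.
Proof. by have := lie_linr 1 x y z; rewrite !scale1r. Qed.
Lemma lie0r z : lie z 0 = 0.
Proof. by apply: dup0; rewrite -lieDr addr0. Qed.
Lemma lieZr a x z : lie x (a *: z) = a *: lie x z.
Proof. by have := lie_linr a x z 0; rewrite !addr0 lie0r addr0. Qed.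
Lemma lieNr x z : lie x (- z) = - lie x z.
Proof. by rewrite -scaleN1r lieZr scaleN1r. Qed.
Lemma lieBr x y z : lie x (y - z) = lie x y - lie x z.
Proof. by rewrite lieDr lieNr. Qed.

Lemma evD x y : e (x + y) = e x + e y.
Proof. by have := @even_lin _ L 1 x y; rewrite !scale1r. Qed.
Lemma ev0 : e 0 = 0.
Proof. by apply: dup0; rewrite -evD addr0. Qed.
Lemma evZ a x : e (a *: x) = a *: e x.
Proof. by have := @even_lin _ L a x 0; rewrite !addr0 ev0 addr0. Qed.
Lemma evN x : e (- x) = - e x.
Proof. by rewrite -scaleN1r evZ scaleN1r. Qed.
Lemma evB x y : e (x - y) = e x - e y.
Proof. by rewrite evD evN. Qed.

Definition hpart (p : bool) x := if p then x - e x else e x.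
Lemma hpartH (p : bool) x : e (hpart p x) = if p then 0 else hpart p x.
Proof. by case: p; rewrite /hpart ?evB even_idem ?subrr. Qed.
Lemma hpart_id (p : bool) x : e x = (if p then 0 else x) -> hpart p x = x.
Proof. by case: p; rewrite /hpart => ->; rewrite ?subr0. Qed.
Lemma hpart_dec x : x = hpart false x + hpart true x.
Proof. by rewrite /hpart addrC subrK. Qed.
Lemma hpartD (p : bool) x y : hpart p (x + y) = hpart p x + hpart p y.
Proof. by case: p; rewrite /hpart evD // opprD addrACA. Qed.
Lemma hpartZ (p : bool) a x : hpart p (a *: x) = a *: hpart p x.
Proof. by case: p; rewrite /hpart evZ // scalerBr. Qed.
Lemma hpart0 (p : bool) : hpart p 0 = 0.
Proof. by case: p; rewrite /hpart ev0 ?subr0. Qed.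
Lemma hpart_ev (p : bool) x : e x = (if p then 0 else x) -> hpart (~~ p) x = 0.
Proof. by case: p; rewrite /hpart /= => ->; rewrite ?subrr. Qed.

Lemma hom_split (p : bool) x : e x = (if p then 0 else x) -> x = 0 ->
   True. Proof. by []. Qed.

Lemma lie_hparts x y : lie x y = lie (hpart false x) (hpart false y) + lie (hpart false x) (hpart true y)
   + (lie (hpart true x) (hpart false y) + lie (hpart true x) (hpart true y)).
Proof. by rewrite {1}(hpart_dec x) {1}(hpart_dec y) lieDl !lieDr. Qed.

Lemma lieH (p q : bool) x y : e (lie (hpart p x) (hpart q y)) = if p (+) q then 0 else lie (hpart p x) (hpart q y).
Proof. by apply: lie_graded; apply: hpartH. Qed.

Definition cent z := forall x, lie z x = 0.

Lemma center_parts z : center z -> forall (p : bool) x, lie (hpart p z) x = 0.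
Proof.
move=> cz.
have key : forall q x, lie (hpart false z) (hpart q x) = 0 /\ lie (hpart true z) (hpart q x) = 0.
  move=> q x; have h0 : lie z (hpart q x) = 0 by apply: cz.
  have h1 : lie (hpart false z) (hpart q x) + lie (hpart true z) (hpart q x) = 0.
    by rewrite -lieDl -hpart_dec.
  have h2 := congr1 e h1; rewrite ev0 evD !lieH /= in h2.
  clear h0; case: q h1 h2 => /= h1 h2.
  - by rewrite add0r in h2; split=> //; move: h1; rewrite h2 addr0.
  - by rewrite addr0 in h2; split=> //; move: h1; rewrite h2 add0r.
move=> p x; rewrite (hpart_dec x) lieDr.
by case: p; rewrite ?(proj1 (key _ _)) ?(proj2 (key _ _)) addr0.
Qed.

Lemma center_hpart z (p : bool) : center z -> center (hpart p z).
Proof. by move=> cz x; apply: center_parts. Qed.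
Lemma center_even z : center z -> center (e z).
Proof. exact: (@center_hpart z false). Qed.

Lemma center_r z : center z -> forall x, lie x z = 0.
Proof.
move=> cz x; rewrite lie_hparts.
have sk : forall p q, lie (hpart p x) (hpart q z) = 0.
  move=> p q; rewrite (lie_superskew (hpartH p x) (hpartH q z)).
  by rewrite center_parts // scaler0 oppr0.
by rewrite !sk !addr0.
Qed.

Lemma center0 : center (0 : carrier L).
Proof. by move=> x; rewrite lie0l. Qed.
Lemma centerD a (x y : carrier L) : center x -> center y -> center (a *: x + y).
Proof. by move=> cx cy w; rewrite lie_linl cx cy scaler0 addr0. Qed.
End Gen.
Arguments hpart {F L} p x.

Section Hom.
Variables (F : fieldType) (M L : LieSA F) (g : LieSAhom M L).
Lemma homD x y : g (x + y) = g x + g y.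
Proof. by have := homf_lin g 1 x y; rewrite !scale1r. Qed.
Lemma hom0 : g 0 = 0.
Proof. by apply: dup0; rewrite -homD addr0. Qed.
Lemma homZ a x : g (a *: x) = a *: g x.
Proof. by have := homf_lin g a x 0; rewrite !addr0 hom0 addr0. Qed.
Lemma homN x : g (- x) = - g x.
Proof. by rewrite -scaleN1r homZ scaleN1r. Qed.
Lemma homB x y : g (x - y) = g x - g y.
Proof. by rewrite homD homN. Qed.
Lemma hom_hpart (p : bool) x : g (hpart p x) = hpart p (g x).
Proof. by case: p; rewrite /hpart ?homB homf_even. Qed.
End Hom.

Set Implicit Arguments.

Section PartA.
Variables (F : fieldType) (L : LieSA F).
Local Notation V := (carrier L).

Definition Ipred (x : V) := forall (M : LieSA F) (phi : LieSAhom M L),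
  epi phi -> (forall m, phi m = 0 -> center m) -> exists2 z, center z & phi z = x.

Definition idhom : LieSAhom L L.
by refine (@Build_LieSAhom F L L (fun x => x) _ _ _).
Defined.

Lemma I_center x : Ipred x -> center x.
Proof.
move=> Ix; have [|m|z cz <-] := Ix L idhom => //.
- by move=> y; exists y.
- by move=> /= ->; apply: center0.
Qed.

Lemma I0 : Ipred 0.
Proof. by move=> M phi _ _; exists 0; [apply: center0 | apply: hom0]. Qed.

Lemma Ilin a x y : Ipred x -> Ipred y -> Ipred (a *: x + y).
Proof.
move=> Ix Iy M phi ep ck; have [z1 c1 e1] := Ix M phi ep ck; have [z2 c2 e2] := Iy M phi ep ck.
by exists (a *: z1 + z2); [apply: centerD | rewrite homf_lin e1 e2].
Qed.

Lemma Iadd x y : Ipred x -> Ipred y -> Ipred (x + y).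
Proof. by move=> Ix Iy; have := Ilin 1 Ix Iy; rewrite scale1r. Qed.
Lemma Iscale a x : Ipred x -> Ipred (a *: x).
Proof. by move=> Ix; have := Ilin a Ix I0; rewrite addr0. Qed.
Lemma Iopp x : Ipred x -> Ipred (- x).
Proof. by move=> Ix; rewrite -scaleN1r; apply: Iscale. Qed.
Lemma Isub x y : Ipred x -> Ipred y -> Ipred (x - y).
Proof. by move=> Ix Iy; apply: Iadd => //; apply: Iopp. Qed.

Lemma Ieven x : Ipred x -> Ipred (even L x).
Proof.
move=> Ix M phi ep ck; have [z cz ez] := Ix M phi ep ck.
by exists (even M z); [apply: center_even | rewrite homf_even ez].
Qed.

Lemma Ilie x y : Ipred y -> Ipred (lie L x y).
Proof. by move=> Iy; rewrite (center_r (I_center Iy)); apply: I0. Qed.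

Lemma I_graded : graded_ideal Ipred.
Proof. split; [exact: I0 | exact: Ilin | exact: Ieven | exact: Ilie]. Qed.
End PartA.

Set Implicit Arguments.

Section Ext.
Variables (F : fieldType) (L M : LieSA F) (phi : LieSAhom M L) (sg : carrier L -> carrier M).
Hypothesis ck : forall m, phi m = 0 -> center m.
Hypothesis sec : forall y, phi (sg y) = y.
Local Notation V := (carrier L).

Lemma lift m m' n n' : phi m = phi m' -> phi n = phi n' -> lie M m n = lie M m' n'.
Proof.
move=> e1 e2.
have c1 : center (m - m') by apply: ck; rewrite homB e1 subrr.
have c2 : center (n - n') by apply: ck; rewrite homB e2 subrr.
have -> : m = m' + (m - m') by rewrite addrC subrK.
rewrite lieDl c1 addr0.
have -> : n = n' + (n - n') by rewrite addrC subrK.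
by rewrite lieDr (center_r c2) addr0.
Qed.

Definition Bf (x y : V) := lie M (sg x) (sg y).

Lemma B_linl a x y w : Bf (a *: x + y) w = a *: Bf x w + Bf y w.
Proof. by rewrite /Bf -lie_linl; apply: lift; rewrite // homf_lin !sec. Qed.
Lemma B_linr a x y w : Bf w (a *: x + y) = a *: Bf w x + Bf w y.
Proof. by rewrite /Bf -lie_linr; apply: lift; rewrite // homf_lin !sec. Qed.
Lemma B0l y : Bf 0 y = 0.
Proof. by rewrite /Bf (@lift _ 0 _ (sg y)) ?lie0l // sec hom0. Qed.
Lemma B0r y : Bf y 0 = 0.
Proof. by rewrite /Bf (@lift _ (sg y) _ 0) ?lie0r // sec hom0. Qed.

Lemma phi_hp (p : bool) x : phi (hpart p (sg x)) = hpart p x.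
Proof. by rewrite hom_hpart sec. Qed.

Lemma B_hom (p q : bool) x y : even L x = (if p then 0 else x) -> even L y = (if q then 0 else y) ->
  Bf x y = lie M (hpart p (sg x)) (hpart q (sg y)).
Proof. by move=> hx hy; apply: lift; rewrite phi_hp ?sec hpart_id. Qed.

Lemma B_ev x y : even M (Bf x y) = Bf (even L x) (even L y) + Bf (hpart true x) (hpart true y).
Proof.
rewrite /Bf lie_hparts !evD !lieH /= !addr0 add0r.
congr (_ + _); apply: lift; rewrite ?phi_hp ?homB ?homf_even ?sec //.
Qed.

Lemma B_skew (p q : bool) x y : even L x = (if p then 0 else x) -> even L y = (if q then 0 else y) ->
  Bf x y = - (ssign F (p && q) *: Bf y x).
Proof.
move=> hx hy; rewrite (B_hom _ _ _ _ hx hy) (B_hom _ _ _ _ hy hx).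
by apply: lie_superskew; apply: hpartH.
Qed.

Lemma B_jac (p q r : bool) x y w : even L x = (if p then 0 else x) -> even L y = (if q then 0 else y) ->
  even L w = (if r then 0 else w) ->
  ssign F (p && r) *: Bf x (lie L y w) + ssign F (q && p) *: Bf y (lie L w x)
   + ssign F (r && q) *: Bf w (lie L x y) = 0.
Proof.
move=> hx hy hw.
have E : forall (a b c : V) (pa pb pc : bool), even L a = (if pa then 0 else a) ->
   even L b = (if pb then 0 else b) -> even L c = (if pc then 0 else c) ->
   Bf a (lie L b c) = lie M (hpart pa (sg a)) (lie M (hpart pb (sg b)) (hpart pc (sg c))).
  move=> a b c pa pb pc ha hb hc; apply: lift; first by rewrite phi_hp hpart_id.
  by rewrite homf_lie !phi_hp !hpart_id.
rewrite (E _ _ _ _ _ _ hx hy hw) (E _ _ _ _ _ _ hy hw hx) (E _ _ _ _ _ _ hw hx hy).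
by apply: lie_superjacobi; apply: hpartH.
Qed.

Definition evalB (s : seq (F * V * V)) : carrier M := \sum_(t <- s) t.1.1 *: Bf t.1.2 t.2.

Definition scl (a : F) (s : seq (F * V * V)) := map (fun t => (a * t.1.1, t.1.2, t.2)) s.
Definition evs (s : seq (F * V * V)) :=
  flatten (map (fun t => [:: (t.1.1, even L t.1.2, even L t.2); (t.1.1, hpart true t.1.2, hpart true t.2)]) s).

Lemma evalB_cat s t : evalB (s ++ t) = evalB s + evalB t.
Proof. by rewrite /evalB big_cat. Qed.
Lemma evalB_nil : evalB [::] = 0.
Proof. by rewrite /evalB big_nil. Qed.
Lemma evalB_scl a s : evalB (scl a s) = a *: evalB s.
Proof.
rewrite /evalB /scl big_map scaler_sumr; apply: eq_bigr => t _.
by rewrite scalerA.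
Qed.
Lemma evalB_1 a x y : evalB [:: (a, x, y)] = a *: Bf x y.
Proof. by rewrite /evalB big_cons big_nil addr0. Qed.
Lemma evalB_evs s : evalB (evs s) = even M (evalB s).
Proof.
elim: s => [|t s IH]; first by rewrite /evs /= evalB_nil ev0.
have -> : evs (t :: s) = [:: (t.1.1, even L t.1.2, even L t.2); (t.1.1, hpart true t.1.2, hpart true t.2)] ++ evs s by [].
rewrite evalB_cat IH {3}/evalB big_cons evD evZ B_ev scalerDr.
by rewrite /evalB !big_cons big_nil addr0.
Qed.
End Ext.

Set Implicit Arguments.

Section PU.
Variables (F : fieldType) (L : LieSA F).
Local Notation V := (carrier L).
Definition TU : choiceType := (V * seq (F * V * V))%type.

Definition adm (M : LieSA F) (phi : LieSAhom M L) (sg : V -> carrier M) :=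
  (forall m, phi m = 0 -> center m) /\ (forall y, phi (sg y) = y).

Definition RU (u v : TU) := u.1 = v.1 /\
  forall (M : LieSA F) (phi : LieSAhom M L) sg, adm phi sg -> evalB L M sg u.2 = evalB L M sg v.2.

Definition zU : TU := (0, [::]).
Definition adU (u v : TU) : TU := (u.1 + v.1, u.2 ++ v.2).
Definition opU (u : TU) : TU := (- u.1, scl L (-1) u.2).
Definition scU a (u : TU) : TU := (a *: u.1, scl L a u.2).
Definition evU (u : TU) : TU := (even L u.1, evs L u.2).
Definition lbU (u v : TU) : TU := (lie L u.1 v.1, [:: (1, u.1, v.1)]).

Lemma homU (p : bool) a : RU (evU a) (if p then zU else a) -> even L a.1 = if p then 0 else a.1.
Proof. by case: p => -[]. Qed.

Ltac rU := split => /=; last intros M phi sg H.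

Definition PU : PreLie F.
refine (@Build_PreLie F TU zU adU opU scU evU lbU RU _ _ _ _ _ _ _ _ _ _ _ _ _ _ _ _ _ _ _ _ _ _ _).
- by move=> a; split.
- by move=> a b [e1 h1]; split; [rewrite e1 | move=> M phi sg H; rewrite (h1 _ _ _ H)].
- by move=> a b c [e1 h1] [e2 h2]; split; [rewrite e1 | move=> M phi sg H; rewrite (h1 _ _ _ H) ?(h2 _ _ _ H)].
- move=> a a' b b' [e1 h1] [e2 h2]; rU; first by rewrite e1 e2.
  by rewrite !evalB_cat (h1 _ _ _ H) ?(h2 _ _ _ H).
- move=> a a' [e1 h1]; rU; first by rewrite e1.
  by rewrite !evalB_scl (h1 _ _ _ H).
- move=> x a a' [e1 h1]; rU; first by rewrite e1.
  by rewrite !evalB_scl (h1 _ _ _ H).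
- move=> a a' [e1 h1]; rU; first by rewrite e1.
  by rewrite !(evalB_evs _ _ (proj1 H) (proj2 H)) (h1 _ _ _ H).
- move=> a a' b b' [e1 h1] [e2 h2]; rU; by rewrite e1 e2.
- move=> a b c; rU; by rewrite ?addrA ?catA.
- move=> a b; rU; by rewrite ?(addrC a.1) // !evalB_cat addrC.
- move=> a; rU; by rewrite ?add0r.
- move=> a; rU; by rewrite ?addNr // evalB_cat evalB_scl scaleN1r addNr evalB_nil.
- move=> x y a; rU; by rewrite ?scalerA // !evalB_scl scalerA.
- move=> a; rU; by rewrite ?scale1r // evalB_scl scale1r.
- move=> x a b; rU; by rewrite ?scalerDr // evalB_cat !evalB_scl evalB_cat scalerDr.
- move=> x y a; rU; by rewrite ?scalerDl // evalB_cat !evalB_scl scalerDl.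
- move=> x a b; rU; first by rewrite even_lin.
  by rewrite evalB_cat !(evalB_evs _ _ (proj1 H) (proj2 H)) evalB_cat evalB_scl even_lin evalB_scl (evalB_evs _ _ (proj1 H) (proj2 H)).
- move=> a; rU; first by rewrite even_idem.
  by rewrite !(evalB_evs _ _ (proj1 H) (proj2 H)) even_idem.
- move=> x a b c; rU; first by rewrite lie_linl.
  by rewrite /evalB !big_cons !big_nil /= !addr0 mulr1 !scale1r (B_linl _ _ (proj1 H) (proj2 H)).
- move=> x a b c; rU; first by rewrite lie_linr.
  by rewrite /evalB !big_cons !big_nil /= !addr0 mulr1 !scale1r (B_linr _ _ (proj1 H) (proj2 H)).
- move=> p q a b /homU ha /homU hb; rU.
  + by rewrite (lie_graded ha hb); case: (p (+) q).
  + rewrite (evalB_evs _ _ (proj1 H) (proj2 H)) evalB_1 scale1r (B_hom _ _ (proj1 H) (proj2 H) _ _ _ _ ha hb) lieH.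
    by case: (p (+) q); rewrite /= ?evalB_nil // evalB_1 scale1r (B_hom _ _ (proj1 H) (proj2 H) _ _ _ _ ha hb).
- move=> p q a b /homU ha /homU hb; rU; first by rewrite (lie_superskew ha hb).
  by rewrite !evalB_1 scale1r mulr1 mulN1r scaleNr (B_skew _ _ (proj1 H) (proj2 H) _ _ _ _ ha hb).
- move=> p q r a b c /homU ha /homU hb /homU hc; rU; first by rewrite (lie_superjacobi ha hb hc).
  rewrite /evalB !big_cons big_nil /= !mulr1 addr0 addrA.
  exact: (B_jac _ _ (proj1 H) (proj2 H) _ _ _ _ _ _ ha hb hc).
Defined.
End PU.

Set Implicit Arguments.

Section PQ.
Variables (F : fieldType) (L : LieSA F).
Local Notation V := (carrier L).
Local Notation I := (Ipred L).
Definition TQ : choiceType := V.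
Definition RQ (a b : TQ) := I (a - b).
Lemma RQ_eq a b : a = b -> RQ a b.
Proof. by move=> ->; rewrite /RQ subrr; apply: I0. Qed.

Lemma lie_modl a a' y : I (a - a') -> lie L a y = lie L a' y.
Proof.
move=> h; have c := I_center h.
by rewrite -{1}(subrK a' a) lieDl c add0r.
Qed.
Lemma lie_modr b b' x : I (b - b') -> lie L x b = lie L x b'.
Proof.
move=> h; have c := I_center h.
by rewrite -{1}(subrK b' b) lieDr (center_r c) add0r.
Qed.
Lemma homQI (p : bool) a : RQ (even L a) (if p then 0 else a) -> I (a - hpart p a).
Proof.
rewrite /RQ /hpart; case: p => h.
- by rewrite opprB addrC subrK; rewrite subr0 in h.
- by rewrite -opprB; apply: Iopp.
Qed.

Definition PQ : PreLie F.
refine (@Build_PreLie F TQ 0 +%R -%R *:%R (even L) (lie L) RQ _ _ _ _ _ _ _ _ _ _ _ _ _ _ _ _ _ _ _ _ _ _ _).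
- by move=> a; apply: RQ_eq.
- by move=> a b h; rewrite /RQ -opprB; apply: Iopp.
- by move=> a b c h1 h2; rewrite /RQ -(subrK b a) -addrA; apply: Iadd.
- by move=> a a' b b' h1 h2; rewrite /RQ /= opprD addrACA; apply: Iadd.
- by move=> a a' h; rewrite /RQ /= -opprD; apply: Iopp.
- by move=> x a a' h; rewrite /RQ /= -scalerBr; apply: Iscale.
- by move=> a a' h; rewrite /RQ /= -evB; apply: Ieven.
- move=> a a' b b' h1 h2; apply: RQ_eq => /=.
  by rewrite (lie_modl _ _ _ h1) (lie_modr _ _ _ h2).
- by move=> a b c; apply: RQ_eq; rewrite /= addrA.
- by move=> a b; apply: RQ_eq; rewrite /= addrC.
- by move=> a; apply: RQ_eq; rewrite /= add0r.
- by move=> a; apply: RQ_eq; rewrite /= addNr.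
- by move=> x y a; apply: RQ_eq; rewrite /= scalerA.
- by move=> a; apply: RQ_eq; rewrite /= scale1r.
- by move=> x a b; apply: RQ_eq; rewrite /= scalerDr.
- by move=> x y a; apply: RQ_eq; rewrite /= scalerDl.
- by move=> x a b; apply: RQ_eq; rewrite /= even_lin.
- by move=> a; apply: RQ_eq; rewrite /= even_idem.
- by move=> x a b c; apply: RQ_eq; rewrite /= lie_linl.
- by move=> x a b c; apply: RQ_eq; rewrite /= lie_linr.
- move=> p q a b /homQI ha /homQI hb; apply: RQ_eq => /=.
  rewrite (lie_modl _ _ _ ha) (lie_modr _ _ _ hb) lieH.
  by case: (p (+) q).
- move=> p q a b /homQI ha /homQI hb; apply: RQ_eq => /=.
  rewrite (lie_modl _ _ _ ha) (lie_modr _ _ _ hb) (lie_modl _ _ _ hb) (lie_modr _ _ _ ha).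
  by apply: lie_superskew; apply: hpartH.
- move=> p q r a b c /homQI ha /homQI hb /homQI hc; apply: RQ_eq => /=.
  rewrite !(lie_modl _ _ _ ha) !(lie_modl _ _ _ hb) !(lie_modl _ _ _ hc).
  rewrite !(lie_modr _ _ _ ha) !(lie_modr _ _ _ hb) !(lie_modr _ _ _ hc).
  by apply: lie_superjacobi; apply: hpartH.
Defined.
End PQ.

Set Implicit Arguments.

Section Cap.
Variables (F : fieldType) (L : LieSA F).
Local Notation V := (carrier L).
Local Notation I := (Ipred L).
Definition QL := mkL (PQ L).
Definition UL := mkL (PU L).

Definition ph : LieSAhom L QL.
refine (@Build_LieSAhom F L QL (fun x => pi (PQ L) x) _ _ _).
- by move=> a x y; rewrite piZ piD.
- by move=> x y; rewrite piL.
- by move=> x; rewrite piE.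
Defined.

Lemma ph_epi : epi ph.
Proof. by elim/pi_ind => a; exists a. Qed.
Lemma ph_ker x : ph x = 0 <-> I x.
Proof. by rewrite /= pi0 pi_eq /= /RQ subr0. Qed.

Definition fUf (X : carrier UL) : carrier QL := pi (PQ L) (repr (X : Q (PU L))).1.
Lemma fU_pi u : fUf (pi (PU L) u) = pi (PQ L) u.1.
Proof. by rewrite /fUf; case: (R_repr (PU L) u) => ->. Qed.

Definition fU : LieSAhom UL QL.
refine (@Build_LieSAhom F UL QL fUf _ _ _).
- by move=> a; elim/pi_ind=> u; elim/pi_ind=> v; rewrite piZ piD !fU_pi piZ piD.
- by elim/pi_ind=> u; elim/pi_ind=> v; rewrite piL !fU_pi piL.
- by elim/pi_ind=> u; rewrite piE !fU_pi piE.
Defined.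

Lemma fU_epi : epi fU.
Proof. by elim/pi_ind => a; exists (pi (PU L) (a, [::])); rewrite /= fU_pi. Qed.

Lemma fU_ker h : fU h = 0 <-> center h.
Proof.
elim/pi_ind: h => u; rewrite /= fU_pi pi0 pi_eq /= /RQ subr0; split.
- move=> Iu; elim/pi_ind => v; rewrite piL pi0 pi_eq; split => /=.
    by apply: I_center.
  move=> M phi sg [ck sec]; rewrite evalB_1 evalB_nil scale1r /Bf.
  have [|z cz ez] := Iu M phi _ ck; first by move=> y; exists (sg y).
  by rewrite (@lift _ _ _ phi ck _ z _ (sg v.1)) ?sec ?ez.
- move=> cu M phi ep ck.
  pose sg y := proj1_sig (constructive_indefinite_description _ (ep y)).
  have sec : forall y, phi (sg y) = y by move=> y; rewrite /sg; case: constructive_indefinite_description.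
  exists (sg u.1) => // m.
  rewrite (@lift _ _ _ phi ck _ (sg u.1) _ (sg (phi m))) ?sec //.
  have := cu (pi (PU L) (phi m, [::])); rewrite piL pi0 => /pi_eq [_ /(_ M phi sg (conj ck sec))].
  by rewrite evalB_1 evalB_nil scale1r.
Qed.

Lemma QL_capable : capable QL.
Proof. by exists UL, fU; split; [apply: fU_epi | apply: fU_ker]. Qed.

Lemma I_quot_capable : quot_capable I.
Proof. by exists QL, ph; split; [apply: ph_epi | apply: ph_ker | apply: QL_capable]. Qed.
End Cap.

Set Implicit Arguments.

Section Pull.
Variables (F : fieldType) (L Qg H : LieSA F) (p : LieSAhom L Qg) (f : LieSAhom H Qg).
Definition TP : choiceType := {u : carrier L * carrier H | p u.1 == f u.2}.

Lemma TPeq (u v : TP) : (val u).1 = (val v).1 -> (val u).2 = (val v).2 -> u = v.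
Proof. by move=> e1 e2; apply: val_inj; case: (val u) e1 e2 => a b; case: (val v) => c d /= -> ->. Qed.

Definition mkP l h (pf : p l == f h) : TP := exist _ (l, h) pf.

Lemma memP (u : TP) : p (val u).1 = f (val u).2.
Proof. exact: (eqP (valP u)). Qed.

Definition zP : TP := @mkP 0 0 (introT eqP (etrans (hom0 p) (esym (hom0 f)))).
Lemma adP_pf (u v : TP) : p ((val u).1 + (val v).1) == f ((val u).2 + (val v).2).
Proof. by apply/eqP; rewrite !homD !memP. Qed.
Definition adP u v := mkP _ _ (adP_pf u v).
Lemma opP_pf (u : TP) : p (- (val u).1) == f (- (val u).2).
Proof. by apply/eqP; rewrite !homN !memP. Qed.
Definition opP u := mkP _ _ (opP_pf u).
Lemma scP_pf a (u : TP) : p (a *: (val u).1) == f (a *: (val u).2).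
Proof. by apply/eqP; rewrite !homZ !memP. Qed.
Definition scP a u := mkP _ _ (scP_pf a u).
Lemma evP_pf (u : TP) : p (even L (val u).1) == f (even H (val u).2).
Proof. by apply/eqP; rewrite !homf_even !memP. Qed.
Definition evP u := mkP _ _ (evP_pf u).
Lemma lbP_pf (u v : TP) : p (lie L (val u).1 (val v).1) == f (lie H (val u).2 (val v).2).
Proof. by apply/eqP; rewrite !homf_lie !memP. Qed.
Definition lbP u v := mkP _ _ (lbP_pf u v).

Lemma homP (b : bool) (a : TP) : evP a = (if b then zP else a) ->
  even L (val a).1 = (if b then 0 else (val a).1) /\ even H (val a).2 = (if b then 0 else (val a).2).
Proof.
move=> h; have h1 := congr1 (fun u => (val u).1) h; have h2 := congr1 (fun u => (val u).2) h.
by clear h; case: b h1 h2 => /= -> ->.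
Qed.

Ltac tp := apply: TPeq => /=.

Definition PP : PreLie F.
refine (@Build_PreLie F TP zP adP opP scP evP lbP eq _ _ _ _ _ _ _ _ _ _ _ _ _ _ _ _ _ _ _ _ _ _ _).
- by [].
- by move=> a b ->.
- by move=> a b c -> ->.
- by move=> a a' b b' -> ->.
- by move=> a a' ->.
- by move=> x a a' ->.
- by move=> a a' ->.
- by move=> a a' b b' -> ->.
- by move=> a b c; tp; rewrite addrA.
- by move=> a b; tp; rewrite addrC.
- by move=> a; tp; rewrite add0r.
- by move=> a; tp; rewrite addNr.
- by move=> x y a; tp; rewrite scalerA.
- by move=> a; tp; rewrite scale1r.
- by move=> x a b; tp; rewrite scalerDr.
- by move=> x y a; tp; rewrite scalerDl.
- by move=> x a b; tp; rewrite even_lin.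
- by move=> a; tp; rewrite even_idem.
- by move=> x a b c; tp; rewrite lie_linl.
- by move=> x a b c; tp; rewrite lie_linr.
- move=> b1 b2 a c /homP [h1 h2] /homP [k1 k2]; case: (b1 (+) b2) (lie_graded h1 k1) (lie_graded h2 k2) => e1 e2; tp; by [].
- move=> b1 b2 a c /homP [h1 h2] /homP [k1 k2]; tp; [exact: lie_superskew h1 k1 | exact: lie_superskew h2 k2].
- move=> b1 b2 b3 a b c /homP [h1 h2] /homP [k1 k2] /homP [l1 l2]; tp;
    [exact: lie_superjacobi h1 k1 l1 | exact: lie_superjacobi h2 k2 l2].
Defined.

Definition PL := mkL PP.
Lemma repr_piP (u : TP) : repr (pi PP u : Q PP) = u.
Proof. exact: (R_repr PP u). Qed.
Definition phiPf (X : carrier PL) : carrier L := (val (repr (X : Q PP))).1.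
Lemma phiP_pi u : phiPf (pi PP u) = (val u).1.
Proof. by rewrite /phiPf repr_piP. Qed.
Definition phiP : LieSAhom PL L.
refine (@Build_LieSAhom F PL L phiPf _ _ _).
- by move=> a; elim/pi_ind=> u; elim/pi_ind=> v; rewrite piZ piD !phiP_pi.
- by elim/pi_ind=> u; elim/pi_ind=> v; rewrite piL !phiP_pi.
- by elim/pi_ind=> u; rewrite piE !phiP_pi.
Defined.
End Pull.

Lemma I_min (F : fieldType) (L : LieSA F) (J : carrier L -> Prop) :
  quot_capable J -> forall x, Ipred L x -> J x.
Proof.
move=> [Qg [p [ep kp [H [f [ef kf]]]]]] x Ix.
have mk : forall l h, f h = p l -> exists u : TP p f, val u = (l, h).
  by move=> l h e; exists (exist _ (l, h) (introT eqP (esym e))).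
have [] := Ix (PL p f) (phiP p f).
- move=> l; have [h eh] := ef (p l); have [u eu] := mk l h eh.
  by exists (pi (PP p f) u); rewrite /= phiP_pi eu.
- elim/pi_ind=> u; rewrite /= phiP_pi => u0.
  elim/pi_ind=> v; rewrite piL pi0; apply/pi_eq; apply: TPeq => /=.
    by rewrite u0 lie0l.
  suff c : center (val u).2 by rewrite c.
  by apply/kf; rewrite -memP u0 hom0.
elim/pi_ind=> u cu; rewrite /= phiP_pi => ux.
have c2 : center (val u).2.
  move=> h'; have [l' el'] := ep (f h'); have [v ev] := mk l' h' (esym el').
  have := cu (pi (PP p f) v); rewrite piL pi0 => /pi_eq /(congr1 (fun w => (val w).2)) /=.
  by rewrite ev.
by apply/kp; rewrite -ux memP; apply/kf.
Qed.

Unset Implicit Arguments.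
Theorem mainTheorem11 (F : fieldType)
  (hF2 : 2%N \notin [pchar F]) (hF3 : 3%N \notin [pchar F]) (L : LieSA F) :
  is_epicenter (L := L)
    (fun x : carrier L =>
       forall (M : LieSA F) (phi : LieSAhom M L),
         epi phi -> (forall m, phi m = 0 -> center m) ->
         exists2 z, center z & phi z = x).
Proof.
split; [exact: (I_graded L) | exact: (I_quot_capable L) | ].
by move=> J _ qJ x Ix; exact: (I_min qJ Ix).
Qed.
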